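(* Let $E$ be a set and let the power group $G=2^E$ carry a gliding system in which any two independent glides are disjoint subsets of $E$. Let $\omega:X_G\to I^E$ be the evaluation map. Suppose that for any two different cubic sets of glides $S_1,S_2$ one has $[S_1]\ne[S_2]$. Suppose $\mathcal{D}\subset G$ is such that every glide $s$ admits a partition $s=s'\sqcup s''$ into two nonempty subsets with the property that whenever $A\in\mathcal{D}$ and $sA\in\mathcal{D}$, the set $s\cap A$ equals $s'$ or $s''$. Then the restriction of $\omega$ to $X_{\mathcal{D}}\subset X_G$ is injective.
   Context: $2^E$ is the group of subsets of $E$ with product $AB=(A\cup B)\setminus(A\cap B)$; every element is its own inverse. A gliding system in $G$ is a pair $(\mathcal{G},\mathcal{I})$, $\mathcal{G}\subset G\setminus\{\emptyset\}$ (glides), $\mathcal{I}\subset\mathcal{G}\times\mathcal{G}$ symmetric (independence) with $st=ts\ne\emptyset$ for $(s,t)\in\mathcal{I}$. A cubic set of glides is a finite set $S$ of pairwise independent glides with $[T_1]\ne[T_2]$ for distinct $T_1,T_2\subset S$, where $[T]=\prod_{t\in T}t$ (here the union, since independent glides are disjoint). The glide complex $X_G$ is the cubed complex obtained from the cubes $I^S$ (points $(A,S,x)$, $A\in G$, $S$ cubic, $x:S\to I=[0,1]$) modulo the equivalence generated by $(A,S,x)\sim(A,S',x')$ when $S\subset S'$, $x'|_S=x$, $x'(S'\setminus S)=0$, and $(A,S,x)\sim([T]A,S,x')$ when $T\subset S$, $x'=x$ on $S\setminus T$, $x'(t)=1-x(t)$ for $t\in T$. For $\mathcal{D}\subset G$,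 $X_{\mathcal{D}}$ is the subcomplex of cubes all of whose vertices $[T]A$ ($T\subset S$) lie in $\mathcal{D}$. For $A\subset E$ let $\delta_A:E\to\{0,1\}$ be its characteristic function. The evaluation map is $\omega(A,S,x)=\delta_A+(1-2\delta_A)\sum_{s\in S}x(s)\delta_s$; explicitly $\omega(a)(e)=\delta_A(e)$ for $e\notin\bigcup_{s\in S}s$, $=x(s)$ for $e\in s\setminus A$, and $=1-x(s)$ for $e\in s\cap A$ ($s\in S$). *)

(* Defs.v *)
From Stdlib Require Import Reals List Relations.
Import ListNotations.
Open Scope R_scope.

Definition subset (E : Type) := E -> bool.

(* group product in 2^E: symmetric difference *)
Definition sdiff {E : Type} (A B : subset E) : subset E := fun e => xorb (A e) (B e).
Definition emptyset {E : Type} : subset E := fun _ => false.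
Definition set_inter {E : Type} (A B : subset E) : subset E := fun e => andb (A e) (B e).
Definition set_union {E : Type} (A B : subset E) : subset E := fun e => orb (A e) (B e).
Definition set_disjoint {E : Type} (A B : subset E) : Prop :=
  forall e, A e = true -> B e = false.

(* [T] = product of the elements of a (duplicate-free) list T *)
Definition bracket {E : Type} (T : list (subset E)) : subset E :=
  fold_right sdiff emptyset T.

Definition delta {E : Type} (A : subset E) (e : E) : R := if A e then 1 else 0.

Definition gliding_system {E : Type} (glide : subset E -> Prop)
  (indep : subset E -> subset E -> Prop) : Prop :=
  (forall s, glide s -> s <> emptyset) /\
  (forall s t, indep s t -> glide s /\ glide t) /\
  (forall s t, indep s t -> indep t s) /\
  (forall s t, indep s t -> sdiff s t = sdiff t s /\ sdiff s t <> emptyset).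

(* a cubic set of glides, represented by a duplicate-free list *)
Definition cubic {E : Type} (glide : subset E -> Prop)
  (indep : subset E -> subset E -> Prop) (S : list (subset E)) : Prop :=
  NoDup S /\
  (forall s, In s S -> glide s) /\
  (forall s t, In s S -> In t S -> s <> t -> indep s t) /\
  (forall T1 T2, NoDup T1 -> NoDup T2 -> incl T1 S -> incl T2 S ->
     ~ (forall s, In s T1 <-> In s T2) -> bracket T1 <> bracket T2).

(* a point (A, S, x); only the values of x on S are relevant *)
Definition point (E : Type) : Type :=
  (subset E * list (subset E) * (subset E -> R))%type.

Definition valid_pt {E : Type} (glide : subset E -> Prop)
  (indep : subset E -> subset E -> Prop) (p : point E) : Prop :=
  let '(A, SS, x) := p in
  cubic glide indep SS /\ (forall s, In s SS -> 0 <= x s <= 1).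

(* generating moves of the equivalence defining X_G *)
Definition gen_rel {E : Type} (glide : subset E -> Prop)
  (indep : subset E -> subset E -> Prop) (p q : point E) : Prop :=
  valid_pt glide indep p /\ valid_pt glide indep q /\
  (let '(A, SS, x) := p in let '(A', SS', x') := q in
   (A' = A /\ incl SS SS' /\ (forall s, In s SS -> x' s = x s) /\
      (forall s, In s SS' -> ~ In s SS -> x' s = 0))
   \/
   (SS' = SS /\ exists T : list (subset E), NoDup T /\ incl T SS /\
      A' = sdiff (bracket T) A /\
      (forall s, In s SS -> In s T -> x' s = 1 - x s) /\
      (forall s, In s SS -> ~ In s T -> x' s = x s))).

(* equality of points of X_G *)
Definition xequiv {E : Type} (glide : subset E -> Prop)
  (indep : subset E -> subset E -> Prop) : relation (point E) :=
  clos_refl_sym_trans (point E) (gen_rel glide indep).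

(* the cube I^S at A belongs to X_D: all its vertices [T]A lie in D *)
Definition cube_in {E : Type} (D : subset E -> Prop) (A : subset E)
  (S : list (subset E)) : Prop :=
  forall T, NoDup T -> incl T S -> D (sdiff (bracket T) A).

Definition in_XD {E : Type} (glide : subset E -> Prop)
  (indep : subset E -> subset E -> Prop) (D : subset E -> Prop) (p : point E) : Prop :=
  exists q : point E, xequiv glide indep p q /\ valid_pt glide indep q /\
    (let '(A, SS, _) := q in cube_in D A SS).

Definition omega {E : Type} (p : point E) (e : E) : R :=
  let '(A, SS, x) := p in
  delta A e + (1 - 2 * delta A e) *
    fold_right (fun s acc => x s * delta s e + acc) 0 SS.

(* Main.v *)
Require Import Defs.
From Stdlib Require Import Reals List Lra Relations Classical ClassicalEpsilon FunctionalExtensionality Bool.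
Import ListNotations.
Open Scope R_scope.

Definition pw {E : Type} (L : list (subset E)) :=
  NoDup L /\ forall s t, In s L -> In t L -> s <> t -> set_disjoint s t.

Lemma pw_unique {E} (L : list (subset E)) s t e :
  pw L -> In s L -> In t L -> s e = true -> t e = true -> s = t.
Proof.
  intros [_ H] Hs Ht Hse Hte. destruct (classic (s = t)) as [|n]; auto.
  specialize (H s t Hs Ht n e Hse). congruence.
Qed.

Lemma pw_incl {E} (S T : list (subset E)) : pw S -> NoDup T -> incl T S -> pw T.
Proof. intros [_ H] HT HTS. split; auto. Qed.

Lemma pw_cons {E} (a : subset E) L : pw (a :: L) -> pw L.
Proof. intros H. destruct H as [H1 H2]. apply (pw_incl (a::L)); [split; auto| |].
  inversion H1; auto. intros x Hx; right; auto. Qed.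

Lemma bracket_true {E} (T : list (subset E)) e :
  pw T -> (bracket T e = true <-> exists t, In t T /\ t e = true).
Proof.
  induction T as [|a T IH]; intros Hpw.
  - simpl. split; [discriminate | intros [t [[] _]]].
  - pose proof (pw_cons _ _ Hpw) as HT. specialize (IH HT).
    pose proof Hpw as [Hnd _]. inversion Hnd; subst.
    simpl. unfold sdiff. destruct (a e) eqn:Ha.
    + destruct (bracket T e) eqn:Hb.
      * exfalso. destruct (proj1 IH eq_refl) as [t [Ht Hte]].
        assert (a = t) by (apply (pw_unique (a::T) a t e); simpl; tauto).
        subst; auto.
      * simpl. split; auto. intros _. exists a; simpl; auto.
    + simpl. rewrite IH. split.
      * intros [t [Ht Hte]]. exists t; simpl; auto.
      * intros [t [[Ht|Ht] Hte]]. subst; congruence. exists t; auto.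
Qed.

Lemma bracket_false {E} (T : list (subset E)) e :
  (forall t, In t T -> t e = false) -> bracket T e = false.
Proof.
  induction T as [|a T IH]; intros H; simpl; auto. unfold sdiff.
  rewrite H by (simpl; auto). rewrite IH; auto. intros t Ht; apply H; simpl; auto.
Qed.

Definition fs {E : Type} (x : subset E -> R) (SS : list (subset E)) (e : E) : R :=
  fold_right (fun s acc => x s * delta s e + acc) 0 SS.

Lemma fs_zero {E} x (SS : list (subset E)) e :
  (forall t, In t SS -> t e = false) -> fs x SS e = 0.
Proof.
  induction SS as [|a SS IH]; intros H; simpl; auto.
  unfold delta at 1. rewrite H by (simpl; auto).
  change (fold_right _ 0 SS) with (fs x SS e). rewrite IH. ring.
  intros t Ht; apply H; simpl; auto.
Qed.

Lemma fs_at {E} x (SS : list (subset E)) s e :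
  pw SS -> In s SS -> s e = true -> fs x SS e = x s.
Proof.
  induction SS as [|a SS IH]; intros Hpw Hs Hse; [destruct Hs|].
  pose proof (pw_cons _ _ Hpw) as HT. pose proof Hpw as [Hnd _]. inversion Hnd; subst.
  simpl. change (fold_right _ 0 SS) with (fs x SS e).
  destruct Hs as [Hs|Hs].
  - subst. unfold delta. rewrite Hse. rewrite fs_zero. ring.
    intros t Ht. destruct (t e) eqn:Hte; auto.
    assert (s = t) by (apply (pw_unique (s::SS) s t e); simpl; tauto). subst; contradiction.
  - destruct (a e) eqn:Hae.
    + assert (a = s) by (apply (pw_unique (a::SS) a s e); simpl; tauto). subst; contradiction.
    + unfold delta at 1. rewrite Hae. rewrite IH; auto. ring.
Qed.

Lemma omega_eq {E} (A : subset E) SS x e :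
  omega (A, SS, x) e = if A e then 1 - fs x SS e else fs x SS e.
Proof. unfold omega, fs, delta at 1 2. destruct (A e); ring. Qed.

Lemma cubic_pw {E} glide indep (Hdisj : forall s t : subset E, indep s t -> set_disjoint s t) S :
  cubic glide indep S -> pw S.
Proof. intros [H1 [H2 [H3 H4]]]. split; auto. Qed.

Lemma cubic_incl {E} glide indep (S T : list (subset E)) :
  cubic glide indep S -> NoDup T -> incl T S -> cubic glide indep T.
Proof.
  intros [H1 [H2 [H3 H4]]] HT HTS. split; [|split; [|split]]; auto.
  intros T1 T2 N1 N2 I1 I2. apply H4; auto; eapply incl_tran; eauto.
Qed.

Lemma nonempty_ex {E} (s : subset E) : s <> emptyset -> exists e, s e = true.
Proof.
  intros H. apply NNPP. intros H'. apply H. apply functional_extensionality.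
  intros e. unfold emptyset. destruct (s e) eqn:He; auto. exfalso; eauto.
Qed.

Lemma gen_omega {E} glide indep (Hdisj : forall s t : subset E, indep s t -> set_disjoint s t)
  p q : gen_rel glide indep p q -> forall e, omega p e = omega q e.
Proof.
  destruct p as [[A SS] x], q as [[A' SS'] x'].
  intros [[Vp _] [[Vq _] H]].
  pose proof (cubic_pw _ _ Hdisj _ Vp) as P. pose proof (cubic_pw _ _ Hdisj _ Vq) as P'.
  destruct H as [[-> [Hinc [Hx H0]]] | [-> [T [HT [HTS [-> [H1 H2]]]]]]]; intro e;
    rewrite !omega_eq.
  - destruct (classic (exists s, In s SS' /\ s e = true)) as [[s [Hs Hse]]|Hn].
    + destruct (classic (In s SS)) as [Hin|Hnin].
      * rewrite (fs_at x SS s e), (fs_at x' SS' s e), Hx; auto.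
      * rewrite (fs_at x' SS' s e), H0, fs_zero; auto.
        intros t Ht. destruct (t e) eqn:Hte; auto.
        assert (t = s) by (apply (pw_unique SS' t s e); auto). subst; contradiction.
    + rewrite !fs_zero; auto.
      * intros t Ht. destruct (t e) eqn:Hte; auto. exfalso; eauto.
      * intros t Ht. destruct (t e) eqn:Hte; auto. exfalso; eauto.
  - pose proof (pw_incl _ _ P HT HTS) as PT. unfold sdiff.
    destruct (classic (exists s, In s SS /\ s e = true)) as [[s [Hs Hse]]|Hn].
    + rewrite (fs_at x SS s e), (fs_at x' SS s e); auto.
      destruct (classic (In s T)) as [Hin|Hnin].
      * assert (bracket T e = true) as Hb by (apply bracket_true; eauto).
        rewrite Hb, H1 by auto. destruct (A e); simpl; ring.
      * assert (Hb : bracket T e = false).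
        { apply bracket_false. intros t Ht. destruct (t e) eqn:Hte; auto.
          assert (t = s) by (apply (pw_unique SS t s e); auto). subst; contradiction. }
        rewrite Hb, H2 by auto. destruct (A e); reflexivity.
    + rewrite bracket_false, !fs_zero; auto; simpl.
      * intros t Ht. destruct (t e) eqn:Hte; auto. exfalso; eauto.
      * intros t Ht. destruct (t e) eqn:Hte; auto. exfalso; eauto.
      * intros t Ht. destruct (t e) eqn:Hte; auto. exfalso; eauto.
Qed.

Lemma xequiv_omega {E} glide indep (Hdisj : forall s t : subset E, indep s t -> set_disjoint s t)
  p q : xequiv glide indep p q -> forall e, omega p e = omega q e.
Proof.
  induction 1; intros.
  - eapply gen_omega; eauto.
  - reflexivity.
  - symmetry; auto.
  - etransitivity; eauto.
Qed.

Lemma bracket_app {E} (T U : list (subset E)) e :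
  bracket (T ++ U) e = xorb (bracket T e) (bracket U e).
Proof.
  induction T as [|a T IH]; simpl; auto. unfold sdiff. rewrite IH.
  destruct (a e), (bracket T e), (bracket U e); reflexivity.
Qed.

Lemma canon {E} glide indep (D : subset E -> Prop)
  (Hdisj : forall s t : subset E, indep s t -> set_disjoint s t) C S z :
  valid_pt glide indep (C, S, z) -> cube_in D C S ->
  exists C0 S0 z0, xequiv glide indep (C, S, z) (C0, S0, z0) /\
    valid_pt glide indep (C0, S0, z0) /\ cube_in D C0 S0 /\
    (forall s, In s S0 -> 0 < z0 s < 1).
Proof.
  intros [Hc Hz] Hcu.
  set (T1 := filter (fun s => if Req_dec_T (z s) 1 then true else false) S).
  set (S0 := filter (fun s => if Rlt_dec 0 (z s) then
                        if Rlt_dec (z s) 1 then true else false else false) S).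
  set (z1 := fun s => if Req_dec_T (z s) 1 then 0 else z s).
  assert (HT1 : forall s, In s T1 <-> In s S /\ z s = 1).
  { intros s. unfold T1. rewrite filter_In. destruct (Req_dec_T (z s) 1); intuition; try discriminate; contradiction. }
  assert (HS0 : forall s, In s S0 <-> In s S /\ 0 < z s < 1).
  { intros s. unfold S0. rewrite filter_In.
    destruct (Rlt_dec 0 (z s)); [destruct (Rlt_dec (z s) 1)|]; intuition; try discriminate; try lra. }
  assert (NS : NoDup S) by (destruct Hc; auto).
  assert (N1 : NoDup T1) by (apply NoDup_filter; auto).
  assert (N0 : NoDup S0) by (apply NoDup_filter; auto).
  assert (I0 : incl S0 S) by (intros s Hs; apply HS0; auto).
  assert (I1 : incl T1 S) by (intros s Hs; apply HT1; auto).
  assert (Hz1 : forall s, In s S -> 0 <= z1 s <= 1).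
  { intros s Hs. unfold z1. destruct (Req_dec_T (z s) 1); [lra| apply Hz; auto]. }
  exists (sdiff (bracket T1) C), S0, z1. split; [|split; [|split]].
  - apply rst_trans with (y := (sdiff (bracket T1) C, S, z1)).
    + apply rst_step. split; [hnf; split; auto|split; [hnf; split; auto|]]. hnf.
      right. split; auto. exists T1. split; [|split; [|split; [|split]]]; auto.
      * intros s Hs Hin. apply HT1 in Hin. unfold z1.
        destruct (Req_dec_T (z s) 1); lra.
      * intros s Hs Hin. unfold z1. destruct (Req_dec_T (z s) 1); auto.
        exfalso; apply Hin; apply HT1; auto.
    + apply rst_sym, rst_step. split; [hnf; split; [eapply cubic_incl; eauto|auto]|].
      split; [hnf; split; auto|]. hnf. left. split; auto. split; auto. split; auto.
      intros s Hs Hn. unfold z1. destruct (Req_dec_T (z s) 1); auto.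
      specialize (Hz s Hs). destruct (Rlt_dec 0 (z s)).
      * exfalso; apply Hn; apply HS0; split; auto; lra.
      * lra.
  - hnf; split; [eapply cubic_incl; eauto|auto].
  - intros T NT IT.
    replace (sdiff (bracket T) (sdiff (bracket T1) C)) with (sdiff (bracket (T ++ T1)) C).
    + apply Hcu.
      * apply NoDup_app; auto. intros s Hs Hs1. apply IT, HS0 in Hs. apply HT1 in Hs1. lra.
      * apply incl_app; auto. eapply incl_tran; eauto.
    + apply functional_extensionality; intro e. unfold sdiff. rewrite bracket_app.
      destruct (bracket T e), (bracket T1 e), (C e); reflexivity.
  - intros s Hs. apply HS0 in Hs. unfold z1. destruct (Req_dec_T (z s) 1); lra.
Qed.

Lemma final {E} glide indep (D : subset E -> Prop)
  (Hgs : gliding_system glide indep)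
  (Hdisj : forall s t, indep s t -> set_disjoint s t)
  (HD : forall s, glide s -> exists s1 s2 : subset E,
     s1 <> emptyset /\ s2 <> emptyset /\ set_disjoint s1 s2 /\ set_union s1 s2 = s /\
     (forall A, D A -> D (sdiff s A) -> set_inter s A = s1 \/ set_inter s A = s2))
  A B S x y :
  valid_pt glide indep (A, S, x) -> valid_pt glide indep (B, S, y) ->
  cube_in D A S -> cube_in D B S ->
  (forall e, omega (A, S, x) e = omega (B, S, y) e) ->
  gen_rel glide indep (A, S, x) (B, S, y).
Proof.
  intros Vp Vq CA CB Hom.
  pose proof Vp as [Hc Hx]. pose proof Vq as [_ Hy].
  pose proof (cubic_pw _ _ Hdisj _ Hc) as P.
  assert (Hgl : forall s, In s S -> glide s) by (destruct Hc as [_ [? _]]; auto).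
  assert (Dv : forall X s, cube_in D X S -> In s S -> D X /\ D (sdiff s X)).
  { intros X s CX Hs. split.
    - exact (CX [] (NoDup_nil _) (incl_nil_l _)).
    - replace (sdiff s X) with (sdiff (bracket [s]) X).
      + apply CX. constructor; [intros []|constructor]. intros t [<-|[]]; auto.
      + apply functional_extensionality; intro e. unfold sdiff; simpl. unfold sdiff, emptyset.
        rewrite xorb_false_r. reflexivity. }
  assert (Key : forall s, In s S ->
     ((forall e, s e = true -> A e = B e) /\ y s = x s) \/
     ((forall e, s e = true -> A e <> B e) /\ y s = 1 - x s)).
  { intros s Hs.
    destruct (HD s (Hgl s Hs)) as [s1 [s2 [_ [_ [H12 [HU Hp]]]]]].
    destruct (Dv A s CA Hs) as [DA DsA]. destruct (Dv B s CB Hs) as [DB DsB].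
    assert (Hdich : (forall e, s e = true -> A e = B e) \/ (forall e, s e = true -> A e <> B e)).
    { destruct (Hp A DA DsA) as [HA|HA]; destruct (Hp B DB DsB) as [HB|HB];
        [left| right | right | left]; intros e He;
        pose proof (equal_f HA e) as a; pose proof (equal_f HB e) as b;
        pose proof (equal_f HU e) as u; pose proof (H12 e) as d;
        unfold set_inter, set_union in *; rewrite He in *; simpl in *;
        destruct (s1 e), (s2 e); simpl in *; try congruence;
        specialize (d eq_refl); discriminate. }
    destruct (nonempty_ex s) as [e0 He0].
    { destruct Hgs as [Hne _]. apply Hne; auto. }
    pose proof (Hom e0) as Ho. rewrite !omega_eq in Ho.
    rewrite (fs_at x S s e0), (fs_at y S s e0) in Ho; auto.
    destruct Hdich as [Hd|Hd]; [left|right]; split; auto;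
      specialize (Hd e0 He0); destruct (A e0), (B e0); try congruence; lra. }
  set (T := filter (fun s => if excluded_middle_informative
                         (exists e, s e = true /\ A e <> B e) then true else false) S).
  assert (HT : forall s, In s T <-> In s S /\ exists e, s e = true /\ A e <> B e).
  { intros s. unfold T. rewrite filter_In.
    destruct (excluded_middle_informative (exists e, s e = true /\ A e <> B e)); intuition;
      try discriminate; contradiction. }
  assert (NT : NoDup T) by (apply NoDup_filter; destruct Hc; auto).
  assert (IT : incl T S) by (intros s Hs; apply HT; auto).
  pose proof (pw_incl _ _ P NT IT) as PT.
  split; [exact Vp|split; [exact Vq|]]. hnf. right. split; auto.
  exists T. split; [|split; [|split; [|split]]]; auto.
  - apply functional_extensionality; intro e. unfold sdiff.
    destruct (classic (exists s, In s S /\ s e = true)) as [[s [Hs Hse]]|Hn].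
    + destruct (classic (In s T)) as [Hin|Hnin].
      * assert (bracket T e = true) as Hb by (apply bracket_true; eauto).
        rewrite Hb. destruct (Key s Hs) as [[K _]|[K _]].
        -- exfalso. apply HT in Hin. destruct Hin as [_ [e1 [He1 Hne]]]. apply Hne; auto.
        -- specialize (K e Hse). destruct (A e), (B e); simpl; congruence.
      * assert (Hb : bracket T e = false).
        { apply bracket_false. intros t Ht. destruct (t e) eqn:Hte; auto.
          assert (t = s) by (apply (pw_unique S t s e); auto). subst; contradiction. }
        rewrite Hb. simpl. destruct (Key s Hs) as [[K _]|[K _]].
        -- symmetry; auto.
        -- exfalso. apply Hnin, HT. split; auto. exists e; auto.
    + rewrite bracket_false. simpl.
      * pose proof (Hom e) as Ho. rewrite !omega_eq, !fs_zero in Ho.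
        -- destruct (A e), (B e); auto; lra.
        -- intros t Ht. destruct (t e) eqn:Hte; auto. exfalso; eauto.
        -- intros t Ht. destruct (t e) eqn:Hte; auto. exfalso; eauto.
      * intros t Ht. destruct (t e) eqn:Hte; auto. exfalso; eauto.
  - intros s Hs Hin. destruct (Key s Hs) as [[K _]|[_ K]]; auto.
    exfalso. apply HT in Hin. destruct Hin as [_ [e1 [He1 Hne]]]. apply Hne; auto.
  - intros s Hs Hnin. destruct (Key s Hs) as [[_ K]|[K _]]; auto.
    exfalso. apply Hnin, HT. split; auto.
    destruct (nonempty_ex s) as [e0 He0].
    { destruct Hgs as [Hne _]. apply Hne; auto. }
    exists e0; auto.
Qed.

Lemma supp {E} glide indep (Hdisj : forall s t : subset E, indep s t -> set_disjoint s t) A S x e :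
  valid_pt glide indep (A, S, x) -> (forall s, In s S -> 0 < x s < 1) ->
  (bracket S e = true <-> 0 < omega (A, S, x) e < 1).
Proof.
  intros [Hc _] Hcan. pose proof (cubic_pw _ _ Hdisj _ Hc) as P.
  rewrite bracket_true by auto. rewrite omega_eq. split.
  - intros [s [Hs Hse]]. rewrite (fs_at x S s e) by auto.
    specialize (Hcan s Hs). destruct (A e); lra.
  - intros H. apply NNPP. intros Hn. rewrite fs_zero in H.
    + destruct (A e); lra.
    + intros t Ht. destruct (t e) eqn:Hte; auto. exfalso; eauto.
Qed.

Theorem lemma10p1 (E : Type) (glide : subset E -> Prop)
  (indep : subset E -> subset E -> Prop) (D : subset E -> Prop)
  (Hgs : gliding_system glide indep)
  (Hdisj : forall s t, indep s t -> set_disjoint s t)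
  (Hcub : forall S1 S2, cubic glide indep S1 -> cubic glide indep S2 ->
     ~ (forall s, In s S1 <-> In s S2) -> bracket S1 <> bracket S2)
  (HD : forall s, glide s -> exists s1 s2 : subset E,
     s1 <> emptyset /\ s2 <> emptyset /\ set_disjoint s1 s2 /\ set_union s1 s2 = s /\
     (forall A, D A -> D (sdiff s A) -> set_inter s A = s1 \/ set_inter s A = s2)) :
  forall p q : point E,
    valid_pt glide indep p -> valid_pt glide indep q ->
    in_XD glide indep D p -> in_XD glide indep D q ->
    (forall e, omega p e = omega q e) ->
    xequiv glide indep p q.
Proof.
  intros p q _ _ [[[C S] z] [Hpr [Vr Cr]]] [[[C' S'] z'] [Hqr [Vr' Cr']]] Hom.
  destruct (canon glide indep D Hdisj C S z Vr Cr) as [C0 [S0 [z0 [H1 [V0 [Cu0 Can0]]]]]].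
  destruct (canon glide indep D Hdisj C' S' z' Vr' Cr') as [C1 [S1 [z1 [H2 [V1 [Cu1 Can1]]]]]].
  assert (Hpq : xequiv glide indep p (C0, S0, z0)) by (eapply rst_trans; eauto).
  assert (Hqq : xequiv glide indep q (C1, S1, z1)) by (eapply rst_trans; eauto).
  assert (Hom2 : forall e, omega (C0, S0, z0) e = omega (C1, S1, z1) e).
  { intro e. rewrite <- (xequiv_omega _ _ Hdisj _ _ Hpq), <- (xequiv_omega _ _ Hdisj _ _ Hqq).
    auto. }
  assert (Hbr : bracket S0 = bracket S1).
  { apply functional_extensionality; intro e.
    pose proof (supp _ _ Hdisj C0 S0 z0 e V0 Can0) as a.
    pose proof (supp _ _ Hdisj C1 S1 z1 e V1 Can1) as b.
    rewrite Hom2 in a. destruct (bracket S0 e), (bracket S1 e); auto.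
    - symmetry; apply b, a; auto.
    - apply a, b; auto. }
  assert (Heq : forall s, In s S0 <-> In s S1).
  { apply NNPP. intro Hn. apply (Hcub S0 S1); auto.
    - destruct V0; auto.
    - destruct V1; auto. }
  assert (V1' : valid_pt glide indep (C1, S0, z1)).
  { split; [destruct V0; auto|]. intros s Hs. destruct V1 as [_ K]. apply K, Heq; auto. }
  assert (G : gen_rel glide indep (C1, S0, z1) (C1, S1, z1)).
  { split; [exact V1'|split; [exact V1|]]. hnf. left.
    split; auto. split; [intros s Hs; apply Heq; auto|]. split; auto.
    intros s Hs Hn. exfalso; apply Hn, Heq; auto. }
  assert (F : gen_rel glide indep (C0, S0, z0) (C1, S0, z1)).
  { apply (final glide indep D Hgs Hdisj HD); auto.
    - intros T NT IT. apply Cu1; auto. intros s Hs; apply Heq, IT; auto.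
    - intro e. rewrite Hom2. symmetry. apply (gen_omega _ _ Hdisj _ _ G). }
  eapply rst_trans; [exact Hpq|].
  eapply rst_trans; [apply rst_step; exact F|].
  eapply rst_trans; [apply rst_step; exact G|].
  apply rst_sym; exact Hqq.
Qed.
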